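(* The $\Re$-module $R_d(a,b,c)$ is isomorphic to $R_d(-a-1,b,c)$. Moreover, setting $w_i=\prod_{h=0}^{i-1}(A-\theta_{d-h})v_0$ for $0\le i\le d$, the vectors $w_0,\dots,w_d$ form a basis of $R_d(a,b,c)$ with $Aw_i=\theta_{d-i}w_i+w_{i+1}$ (with $w_{d+1}=0$) and $Bw_i=\theta_i^*w_i+\phi_iw_{i-1}$ (with $w_{-1}=0$) for $0\le i\le d$, where $\phi_i=i(i-d-1)(a-b+c-\tfrac d2+i)(a-b-c-\tfrac d2+i-1)$.
   Context: $\mathbb F$ is algebraically closed with $\operatorname{char}\mathbb F\ne2$. The Racah algebra $\Re$ is the unital associative $\mathbb F$-algebra with generators $A,B,C,D$ and relations $[A,B]=[B,C]=[C,A]=2D$ together with the requirement that each of $\alpha:=[A,D]+AC-BA$, $\beta:=[B,D]+BA-CB$, $\gamma:=[C,D]+CB-AC$ is central in $\Re$; $\delta:=A+B+C$. For $a,b,c\in\mathbb F$ and $d\in\mathbb N$ set $\theta_i=(a+\tfrac d2-i)(a+\tfrac d2-i+1)$, $\theta_i^*=(b+\tfrac d2-i)(b+\tfrac d2-i+1)$, $\varphi_i=i(i-d-1)(a+b+c+\tfrac d2-i+2)(a+b-c+\tfrac d2-i+1)$. $R_d(a,b,c)$ denotes the $(d+1)$-dimensional $\Re$-module with a basis $v_0,\dots,v_d$ such that $Av_i=\theta_iv_i+v_{i+1}$ ($v_{d+1}=0$), $Bv_i=\theta_i^*v_i+\varphi_iv_{i-1}$ ($v_{-1}=0$), and $\alpha,\beta,\delta$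 act as the scalars $(c-b)(c+b+1)(a-\tfrac d2)(a+\tfrac d2+1)$, $(a-c)(a+c+1)(b-\tfrac d2)(b+\tfrac d2+1)$, $\tfrac d2(\tfrac d2+1)+a(a+1)+b(b+1)+c(c+1)$ respectively (exists, unique up to isomorphism). *)

(* Defs.v *)
From HB Require Import structures.
From mathcomp Require Import all_boot all_order all_algebra all_field.
Set Implicit Arguments. Unset Strict Implicit. Unset Printing Implicit Defensive.
Import Order.TTheory GRing.Theory Num.Theory.
Local Open Scope ring_scope.

(* Conventions: a (d+1)-dimensional Racah-algebra module is given by the four
   matrices (acting on column vectors 'cV_(d.+1), i.e. v |-> M *m v) by which
   the generators A, B, C, D act.  The basis vector v_i is the i-th standard
   column vector, so column i of a matrix is the image of v_i. *)


Definition mxcomm (F : fieldType) (n : nat) (X Y : 'M[F]_n) : 'M[F]_n :=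
  X *m Y - Y *m X.

Definition racah_module (F : fieldType) (n : nat)
    (A B C D : 'M[F]_n) : Prop :=
  let alpha := mxcomm A D + A *m C - B *m A in
  let beta  := mxcomm B D + B *m A - C *m B in
  let gamma := mxcomm C D + C *m B - A *m C in
  [/\ mxcomm A B = 2%:R *: D, mxcomm B C = 2%:R *: D, mxcomm C A = 2%:R *: D &
      forall Z, Z \in [:: alpha; beta; gamma] ->
        forall X, X \in [:: A; B; C; D] -> mxcomm Z X = 0].

Definition half (F : fieldType) (d : nat) : F := d%:R / 2%:R.

Definition theta (F : fieldType) (a : F) (d i : nat) : F :=
  (a + half F d - i%:R) * (a + half F d - i%:R + 1).

Definition varphi (F : fieldType) (a b c : F) (d i : nat) : F :=
  i%:R * (i%:R - d%:R - 1) * (a + b + c + half F d - i%:R + 2%:R)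
       * (a + b - c + half F d - i%:R + 1).

Definition phi (F : fieldType) (a b c : F) (d i : nat) : F :=
  i%:R * (i%:R - d%:R - 1) * (a - b + c - half F d + i%:R)
       * (a - b - c - half F d + i%:R - 1).

(* scalar by which delta = A + B + C acts *)
Definition delta_val (F : fieldType) (a b c : F) (d : nat) : F :=
  half F d * (half F d + 1) + a * (a + 1) + b * (b + 1) + c * (c + 1).

Definition RA (F : fieldType) (a b c : F) (d : nat) : 'M[F]_(d.+1) :=
  \matrix_(i, j) (if i == j :> nat then theta a d j
                  else if i == j.+1 :> nat then 1 else 0).

Definition RB (F : fieldType) (a b c : F) (d : nat) : 'M[F]_(d.+1) :=
  \matrix_(i, j) (if i == j :> nat then theta b d j
                  else if i.+1 == j :> nat then varphi a b c d j else 0).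

Definition RC (F : fieldType) (a b c : F) (d : nat) : 'M[F]_(d.+1) :=
  (delta_val a b c d)%:M - RA a b c d - RB a b c d.

Definition RD (F : fieldType) (a b c : F) (d : nat) : 'M[F]_(d.+1) :=
  (2%:R)^-1 *: mxcomm (RA a b c d) (RB a b c d).

Definition racah_iso (F : fieldType) (n : nat)
    (A1 B1 C1 D1 A2 B2 C2 D2 : 'M[F]_n) : Prop :=
  exists P : 'M[F]_n, [/\ P \in unitmx, P *m A1 = A2 *m P, P *m B1 = B2 *m P,
                          P *m C1 = C2 *m P & P *m D1 = D2 *m P].

Definition Rd_iso (F : fieldType) (d : nat) (a b c a' b' c' : F) : Prop :=
  racah_iso (RA a b c d) (RB a b c d) (RC a b c d) (RD a b c d)
            (RA a' b' c' d) (RB a' b' c' d) (RC a' b' c' d) (RD a' b' c' d).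

Definition v0 (F : fieldType) (d : nat) : 'cV[F]_(d.+1) := delta_mx 0 0.

Definition wvec (F : fieldType) (a b c : F) (d i : nat) : 'cV[F]_(d.+1) :=
  (\prod_(h < i) (RA a b c d - (theta a d (d - h))%:M)) *m v0 F d.

Definition Wmx (F : fieldType) (a b c : F) (d : nat) : 'M[F]_(d.+1) :=
  \matrix_(i, j) wvec a b c d j i 0.

(* Main.v *)
Require Import Defs.
From HB Require Import structures.
From mathcomp Require Import all_boot all_order all_algebra all_field.
From mathcomp Require Import ring zify.
Import Order.TTheory GRing.Theory Num.Theory.
Local Open Scope ring_scope.

Lemma scAl {R : comNzRingType} {m n p} (a : R) (A : 'M_(m, n)) (B : 'M_(n, p)) :
  a *: A *m B = a *: (A *m B).
Proof. by rewrite scalemxAl. Qed.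
Lemma scAr {R : comNzRingType} {m n p} (a : R) (A : 'M_(m, n)) (B : 'M_(n, p)) :
  A *m (a *: B) = a *: (A *m B).
Proof. by rewrite scalemxAr. Qed.

Definition RelM {F : fieldType} {n} (A B : 'M[F]_n) (del al : F) : 'M_n :=
  A *m A *m B - 2%:R *: (A *m B *m A) + B *m A *m A
  - 2%:R *: (A *m B + B *m A) - 2%:R *: (A *m A) + (2%:R * del) *: A
  - (2%:R * al)%:M.

Lemma RelM_apply {F : fieldType} {n} (A B : 'M[F]_n) del al (u : 'cV[F]_n) :
  RelM A B del al *m u =
  A *m (A *m (B *m u)) - 2%:R *: (A *m (B *m (A *m u))) + B *m (A *m (A *m u))
  - 2%:R *: (A *m (B *m u) + B *m (A *m u)) - 2%:R *: (A *m (A *m u))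
  + (2%:R * del) *: (A *m u) - (2%:R * al) *: u.
Proof.
rewrite /RelM !(mulmxDl, mulmxBl, mulNmx, scAl, mul_scalar_mx) -!mulmxA.
by [].
Qed.

Lemma rel_expand {F : fieldType} {n} (A B : 'M[F]_n) (z u1 u2 u3 : 'cV[F]_n)
  (t0 t1 t2 s1 s2 p1 p2 del al : F) :
  A *m z = t0 *: z + p1 *: u1 ->
  A *m u1 = t1 *: u1 + u2 ->
  A *m u2 = t2 *: u2 + u3 ->
  B *m u1 = s1 *: u1 + z ->
  B *m u2 = s2 *: u2 + p2 *: u1 ->
  RelM A B del al *m u1 =
    (t0 ^+ 2 - 2%:R * t1 * t0 + t1 ^+ 2 - 2%:R * (t0 + t1)) *: z
  + ((t0 * p1 + (p1 + s1 * t1) * t1) - 2%:R * (t1 * p1 + (t1 * s1 + p2) * t1)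
     + (t1 ^+ 2 * s1 + (t1+t2) * p2) - 2%:R * ((p1 + s1 * t1) + (t1 * s1 + p2))
     - 2%:R * t1 ^+ 2 + 2%:R * del * t1 - 2%:R * al) *: u1
  + (((p1 + s1 * t1) + s1 * t2) - 2%:R * ((t1 * s1+p2) + s2 * t2) + (t1+t2) * s2
     - 2%:R * (s1 + s2) - 2%:R * (t1+t2) + 2%:R * del) *: u2
  + (s1 - 2%:R * s2 - 2%:R) *: u3 + B *m u3.
Proof.
move=> HA0 HA1 HA2 HB1 HB2.
rewrite RelM_apply.
rewrite !(mulmxDr, mulmxBr, scAr, HA0, HA1, HA2, HB1, HB2).
set y := B *m u3.
apply/matrixP=> i j; rewrite !mxE; ring.
Qed.
Definition ev {F : fieldType} d (j : nat) : 'cV[F]_(d.+1) :=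
  \col_(i < d.+1) ((i : nat) == j)%:R.

Lemma sum_delta {F : fieldType} n (f : 'I_n.+1 -> F) j :
  \sum_(k < n.+1) f k * ((k : nat) == j)%:R = if (j < n.+1)%N then f (inord j) else 0.
Proof.
case: ltnP => hj.
  rewrite (bigD1 (inord j)) //= inordK // eqxx mulr1 big1 ?addr0 //.
  move=> k hk; case: eqP => [hkj|]; last by rewrite mulr0.
  by move: hk; rewrite -val_eqE /= inordK // hkj eqxx.
apply: big1 => k _; case: eqP => [hkj|]; last by rewrite mulr0.
by move: (ltn_ord k); rewrite hkj ltnNge hj.
Qed.

Lemma RA_ev {F : fieldType} (a b c : F) d j :
  RA a b c d *m ev d j = theta a d j *: ev d j + ev d j.+1.
Proof.
apply/matrixP=> i k; rewrite /ev !mxE.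
under eq_bigr => m _ do rewrite [X in _ * X]mxE.
rewrite sum_delta.
case: ltnP => hj.
  rewrite mxE inordK //.
  by case: eqP => h1; case: eqP => h2 /=; rewrite ?mulr1 ?mulr0 ?addr0 ?add0r //; lia.
have hi := ltn_ord i.
by case: eqP => h1; case: eqP => h2 /=; rewrite ?mulr1 ?mulr0 ?addr0 ?add0r //; lia.
Qed.

Lemma varphi0 {F : fieldType} (a b c : F) d : varphi a b c d 0 = 0.
Proof. by rewrite /varphi !mul0r. Qed.

Lemma varphiSd {F : fieldType} (a b c : F) d : varphi a b c d d.+1 = 0.
Proof. rewrite /varphi. have -> : (d.+1%:R - d%:R - 1 : F) = 0 by rewrite -addn1 natrD; ring. by rewrite mulr0 !mul0r. Qed.

Lemma RB_ev {F : fieldType} (a b c : F) d j :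
  RB a b c d *m ev d j = theta b d j *: ev d j + varphi a b c d j *: ev d j.-1.
Proof.
apply/matrixP=> i k; rewrite /ev !mxE.
under eq_bigr => m _ do rewrite [X in _ * X]mxE.
rewrite sum_delta.
have hi := ltn_ord i.
case: ltnP => hj.
  rewrite mxE inordK //.
  case h1: (i == j :> nat); case h2: (i.+1 == j); case h3: (i == j.-1 :> nat) => /=;
    rewrite ?mulr1 ?mulr0 ?addr0 ?add0r //; try lia.
  have -> : j = 0%N by lia.
  by rewrite varphi0 addr0.
case h1: (i == j :> nat); case h3: (i == j.-1 :> nat) => /=; rewrite ?mulr1 ?mulr0 ?addr0 ?add0r //; try lia.
have -> : j = d.+1 by lia.
by rewrite varphiSd.
Qed.

Lemma ev0 {F : fieldType} d : ev d 0 = v0 F d.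
Proof.
apply/matrixP=> i k; rewrite /ev /v0 !mxE (ord1 k) eqxx andbT.
by [].
Qed.

Definition thf {F : fieldType} (a : F) d (x : F) :=
  (a + Defs.half F d - x) * (a + Defs.half F d - x + 1).

Definition alval {F : fieldType} (a b c : F) d :=
  (c - b) * (c + b + 1) * (a - Defs.half F d) * (a + Defs.half F d + 1).

Lemma comb4_zero {F : fieldType} {n} (x0 x1 x2 x3 y2 y3 : F) (z u1 u2 u3 : 'cV[F]_n) :
  x0 = 0 -> x1 = 0 -> x2 + y2 = 0 -> x3 + y3 = 0 ->
  x0 *: z + x1 *: u1 + x2 *: u2 + x3 *: u3 + (y3 *: u3 + y2 *: u2) = 0.
Proof.
move=> h0 h1 h2 h3.
have -> : x0 *: z + x1 *: u1 + x2 *: u2 + x3 *: u3 + (y3 *: u3 + y2 *: u2)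
  = x0 *: z + x1 *: u1 + (x2 + y2) *: u2 + (x3 + y3) *: u3.
  by apply/matrixP=> i k; rewrite !mxE; ring.
by rewrite h0 h1 h2 h3 !scale0r !addr0.
Qed.

Lemma hdE {F : fieldType} d : (2%:R : F) != 0 -> (d%:R : F) = 2%:R * Defs.half F d.
Proof. by move=> h; rewrite /half mulrC divfK. Qed.

Lemma RelM_ev {F : fieldType} (H2 : (2%:R : F) != 0) (a b c : F) d j :
  RelM (RA a b c d) (RB a b c d) (delta_val a b c d) (alval a b c d) *m ev d j = 0.
Proof.
have HA0 : RA a b c d *m (varphi a b c d j *: ev d j.-1)
   = thf a d (j%:R - 1) *: (varphi a b c d j *: ev d j.-1)
     + varphi a b c d j *: ev d j.
  case: j => [|j]; first by rewrite varphi0 !scale0r mulmx0 scaler0 add0r.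
  rewrite scAr RA_ev /=.
  apply/matrixP=> i k; rewrite !mxE /theta /thf; ring.
rewrite (rel_expand _ _ _ _ _ _ _ _ _ _ _ _ _ _ _ HA0 (RA_ev _ _ _ _ _) (RA_ev _ _ _ _ _) (RB_ev _ _ _ _ _) (RB_ev _ _ _ _ _)).
rewrite RB_ev /=.
have hd := hdE d H2.
apply: comb4_zero; rewrite /thf /theta /varphi /delta_val /alval ?hd; ring.
Qed.

Lemma RelM0 {F : fieldType} (H2 : (2%:R : F) != 0) (a b c : F) d :
  RelM (RA a b c d) (RB a b c d) (delta_val a b c d) (alval a b c d) = 0.
Proof.
apply/matrixP=> i k.
have := congr1 (fun M : 'cV[F]_d.+1 => M i 0) (RelM_ev H2 a b c d k).
have -> : ev d k = (delta_mx k 0 : 'cV[F]_d.+1).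
  by apply/matrixP=> p q; rewrite /ev !mxE (ord1 q) eqxx andbT.
by rewrite -colE !mxE => ->.
Qed.

Definition qp {F : fieldType} (a : F) d j : {poly F} :=
  \prod_(h < j) ('X - (theta a d (d - h))%:P).

Lemma wvecE {F : fieldType} (a b c : F) d j :
  wvec a b c d j = horner_mx (RA a b c d) (qp a d j) *m v0 F d.
Proof.
rewrite /wvec /qp rmorph_prod; congr (_ *m _); apply: eq_bigr => h _.
by rewrite rmorphB /= horner_mx_X horner_mx_C.
Qed.

Lemma wvecS {F : fieldType} (a b c : F) d j :
  wvec a b c d j.+1 = (RA a b c d - (theta a d (d - j))%:M) *m wvec a b c d j.
Proof.
rewrite !wvecE /qp big_ord_recr /= mulrC rmorphM /= -mulmxE -mulmxA.
by rewrite rmorphB /= horner_mx_X horner_mx_C.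
Qed.

Lemma wvec0 {F : fieldType} (a b c : F) d : wvec a b c d 0 = ev d 0.
Proof. by rewrite /wvec big_ord0 mul1mx ev0. Qed.

Lemma wvec_d1 {F : fieldType} (a b c : F) d : wvec a b c d d.+1 = 0.
Proof.
rewrite wvecE.
have -> : qp a d d.+1 = char_poly (RA a b c d).
  rewrite char_poly_trig; last first.
    apply/is_trig_mxP=> i j hij; rewrite mxE.
    by case: eqP => h1; [lia|]; case: eqP => h2 //; lia.
  rewrite /qp (reindex_inj rev_ord_inj) /=; apply: eq_bigr => i _.
  by rewrite mxE eqxx subSS subKn // -ltnS.
have := Cayley_Hamilton (RA a b c d) => ->.
by rewrite mul0mx.
Qed.

Lemma RA_w {F : fieldType} (a b c : F) d j :
  RA a b c d *m wvec a b c d j = theta a d (d - j) *: wvec a b c d j + wvec a b c d j.+1.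
Proof. by rewrite wvecS mulmxBl mul_scalar_mx addrC subrK. Qed.

Lemma wvec_tri {F : fieldType} (a b c : F) d j (k : 'I_d.+1) :
  (j <= k)%N -> wvec a b c d j k 0 = ((k : nat) == j)%:R.
Proof.
elim: j k => [|j IH] k hk.
  by rewrite wvec0 /ev mxE.
rewrite wvecS mulmxBl mul_scalar_mx mxE [X in _ + X]mxE [X in _ - X]mxE (IH k); last by lia.
have -> : ((k : nat) == j) = false by apply/eqP; lia.
rewrite mulr0 subr0 mxE.
rewrite (eq_bigr (fun m => RA a b c d k m * ((m : nat) == j)%:R)); last first.
  move=> m _; case: (leqP j m) => hm; first by rewrite IH.
  by rewrite [RA _ _ _ _ k m]mxE ifF ?ifF ?mul0r ?mulr0 //; apply/eqP; lia.
rewrite sum_delta ifT; last by move: (ltn_ord k); lia.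
rewrite [RA _ _ _ _ _ _]mxE inordK; last by move: (ltn_ord k); lia.
have -> : ((k : nat) == j) = false by apply/eqP; lia.
by case: eqP.
Qed.

Lemma WmxE {F : fieldType} (a b c : F) d i j :
  Wmx a b c d i j = wvec a b c d j i 0.
Proof. by rewrite mxE. Qed.

Lemma Wunit {F : fieldType} (a b c : F) d : Wmx a b c d \in unitmx.
Proof.
rewrite unitmxE -det_tr det_trig; last first.
  apply/is_trig_mxP=> i j hij; rewrite mxE WmxE wvec_tri; last by lia.
  by have -> : ((j : nat) == i) = false by apply/eqP; lia.
rewrite big1 ?unitr1 // => i _; rewrite mxE WmxE wvec_tri // eqxx //.
Qed.

Definition tw {F : fieldType} (a : F) d (x : F) :=
  (a - Defs.half F d + x) * (a - Defs.half F d + x + 1).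

Lemma theta_rev {F : fieldType} (H2 : (2%:R : F) != 0) (a : F) d k :
  (k <= d)%N -> theta a d (d - k) = tw a d k%:R.
Proof. by move=> hk; rewrite /theta /tw natrB // (hdE d H2); ring. Qed.

Lemma comb4_solve {F : fieldType} {n} (x0 x1 x2 x3 p s : F) (z u1 u2 u3 y : 'cV[F]_n) :
  0 = x0 *: z + x1 *: u1 + x2 *: u2 + x3 *: u3 + y ->
  x0 = 0 -> x1 = 0 -> x2 = - p -> x3 = - s -> y = s *: u3 + p *: u2.
Proof.
move=> H h0 h1 h2 h3; subst.
apply/matrixP=> i k; have := congr1 (fun M : 'cV[F]_n => M i k) H; rewrite !mxE => H'.
transitivity (y i k - 0); first by rewrite subr0.
by rewrite [X in _ - X]H'; ring.
Qed.

Lemma RB_w {F : fieldType} (H2 : (2%:R : F) != 0) (a b c : F) d j : (j <= d)%N ->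
  RB a b c d *m wvec a b c d j
  = theta b d j *: wvec a b c d j + phi a b c d j *: wvec a b c d j.-1.
Proof.
have hd := hdE d H2.
move: j; suff: forall j, ((j <= d)%N -> RB a b c d *m wvec a b c d j
  = theta b d j *: wvec a b c d j + phi a b c d j *: wvec a b c d j.-1) /\
  ((j.+1 <= d)%N -> RB a b c d *m wvec a b c d j.+1
  = theta b d j.+1 *: wvec a b c d j.+1 + phi a b c d j.+1 *: wvec a b c d j).
  by move=> H j; case: (H j).
elim=> [|j [IH1 IH2]].
  split=> _.
    by rewrite wvec0 RB_ev /phi varphi0 !mul0r !scale0r !addr0.
  rewrite wvecS wvec0 mulmxBl mul_scalar_mx RA_ev.
  rewrite !(mulmxDr, mulmxBr, mulmxN, scAr) !RB_ev /=.
  apply/matrixP=> i k; rewrite !mxE.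
  rewrite /theta /varphi /phi ?subn0 ?hd; ring.
split; first exact: IH2.
move=> hj.
have Hj := IH1 (ltnW (ltnW hj)).
have Hj1 := IH2 (ltnW hj).
have HA0 : RA a b c d *m (phi a b c d j *: wvec a b c d j.-1)
   = tw a d (j%:R - 1) *: (phi a b c d j *: wvec a b c d j.-1)
     + phi a b c d j *: wvec a b c d j.
  case: j hj {IH1 IH2 Hj Hj1} => [|j] hj.
    by rewrite /phi !mul0r !scale0r mulmx0 scaler0 add0r.
  rewrite scAr RA_w /= (theta_rev H2); last by lia.
  have -> : tw a d (j.+1%:R - 1) = tw a d j%:R by rewrite /tw; ring.
  by rewrite scalerDr !scalerA mulrC.
have := rel_expand _ _ _ _ _ _ _ _ _ _ _ _ _ (delta_val a b c d) (alval a b c d)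
  HA0 (RA_w a b c d j) (RA_w a b c d j.+1) Hj Hj1.
rewrite RelM0 // mul0mx => E.
have t0' : theta a d (d - j) = tw a d j%:R by apply: theta_rev; lia.
have t1' : theta a d (d - j.+1) = tw a d j.+1%:R by apply: theta_rev; lia.
eapply comb4_solve; first exact: E.
all: rewrite ?t0' ?t1'.
all: rewrite /tw /theta /phi /delta_val /alval ?hd; ring.
Qed.

Lemma theta_neg {F : fieldType} (H2 : (2%:R : F) != 0) (a : F) d j :
  (j <= d)%N -> theta (- a - 1) d j = theta a d (d - j).
Proof.
move=> hj; rewrite (theta_rev H2) // /theta /tw.
ring.
Qed.

Lemma mul_W_entry {F : fieldType} (a b c : F) d (M : 'M[F]_d.+1) i j :
  (M *m Wmx a b c d) i j = (M *m wvec a b c d j) i 0.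
Proof. by rewrite [LHS]mxE [RHS]mxE; apply: eq_bigr => m _; rewrite WmxE. Qed.

Lemma W_mul_entry {F : fieldType} (a b c : F) d (M : 'M[F]_d.+1) i j :
  (Wmx a b c d *m M) i j = \sum_(m < d.+1) wvec a b c d m i 0 * M m j.
Proof. by rewrite [LHS]mxE; apply: eq_bigr => m _; rewrite WmxE. Qed.

Lemma WA {F : fieldType} (H2 : (2%:R : F) != 0) (a b c : F) d :
  Wmx a b c d *m RA (- a - 1) b c d = RA a b c d *m Wmx a b c d.
Proof.
apply/matrixP=> i j.
rewrite mul_W_entry RA_w W_mul_entry.
rewrite (eq_bigr (fun m : 'I_d.+1 => theta (- a - 1) d j * (wvec a b c d m i 0 * ((m : nat) == j)%:R)
   + wvec a b c d m i 0 * ((m : nat) == j.+1)%:R)); last first.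
  move=> m _; rewrite [RA _ _ _ _ _ _]mxE.
  by case: eqP => h1; case: eqP => h2 /=; try lia; ring.
rewrite big_split /= -mulr_sumr !sum_delta ltn_ord inord_val.
rewrite (theta_neg H2); last by move: (ltn_ord j); lia.
rewrite [RHS]mxE [X in _ = X + _]mxE.
case: ifP => h; first by rewrite inordK.
have -> : (j : nat) = d by move: (ltn_ord j); lia.
by rewrite wvec_d1 [X in _ = _ + X]mxE.
Qed.

Lemma varphi_neg {F : fieldType} (a b c : F) d j :
  varphi (- a - 1) b c d j = phi a b c d j.
Proof. by rewrite /varphi /phi; ring. Qed.

Lemma WB {F : fieldType} (H2 : (2%:R : F) != 0) (a b c : F) d :
  Wmx a b c d *m RB (- a - 1) b c d = RB a b c d *m Wmx a b c d.
Proof.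
apply/matrixP=> i j.
rewrite mul_W_entry (RB_w H2); last by move: (ltn_ord j); lia.
rewrite W_mul_entry.
rewrite (eq_bigr (fun m : 'I_d.+1 => theta b d j * (wvec a b c d m i 0 * ((m : nat) == j)%:R)
   + varphi (- a - 1) b c d j * (wvec a b c d m i 0 * ((m : nat) == j.-1)%:R))); last first.
  move=> m _; rewrite [RB _ _ _ _ _ _]mxE.
  case h1: (m == j :> nat); case h2: (m.+1 == j :> nat); case h3: (m == j.-1 :> nat) => /=; try lia; try ring.
  have -> : (j : nat) = 0%N by lia.
  rewrite varphi0; ring.
rewrite big_split /= -!mulr_sumr !sum_delta ltn_ord inord_val.
rewrite ifT; last by move: (ltn_ord j); lia.
rewrite inordK; last by move: (ltn_ord j); lia.
by rewrite varphi_neg !mxE.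
Qed.

Lemma WC {F : fieldType} (H2 : (2%:R : F) != 0) (a b c : F) d :
  Wmx a b c d *m RC (- a - 1) b c d = RC a b c d *m Wmx a b c d.
Proof.
rewrite /RC.
have -> : delta_val (- a - 1) b c d = delta_val a b c d by rewrite /delta_val; ring.
by rewrite !mulmxBr !mulmxBl mul_mx_scalar mul_scalar_mx (WA H2) (WB H2).
Qed.

Lemma WD {F : fieldType} (H2 : (2%:R : F) != 0) (a b c : F) d :
  Wmx a b c d *m RD (- a - 1) b c d = RD a b c d *m Wmx a b c d.
Proof.
rewrite /RD /mxcomm scAr scAl mulmxBr mulmxBl !mulmxA (WA H2) (WB H2).
by rewrite -!mulmxA (WA H2) (WB H2).
Qed.

Lemma conj_inv {F : fieldType} n (W X1 X2 : 'M[F]_n.+1) :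
  W \in unitmx -> X1 *m W = W *m X2 -> invmx W *m X1 = X2 *m invmx W.
Proof.
move=> hW H.
have := congr1 (fun M => invmx W *m M *m invmx W) H.
by rewrite /= !mulmxA mulVmx // mul1mx -!mulmxA mulmxV // mulmx1 => ->.
Qed.

Theorem proposition4p3 (F : closedFieldType) (Hchar : (2%:R : F) != 0)
    (a b c : F) (d : nat) :
  Rd_iso d a b c (- a - 1) b c /\
  (Wmx a b c d \in unitmx /\
   forall i : nat, (i <= d)%N ->
     RA a b c d *m wvec a b c d i
       = theta a d (d - i) *: wvec a b c d i
         + (if (i < d)%N then wvec a b c d i.+1 else 0) /\
     RB a b c d *m wvec a b c d i
       = theta b d i *: wvec a b c d i
         + (if (0 < i)%N then phi a b c d i *: wvec a b c d i.-1 else 0)).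
Proof.
have hW := Wunit a b c d.
split.
  exists (invmx (Wmx a b c d)); split.
  - by rewrite unitmx_inv.
  - by apply: conj_inv => //; rewrite (WA Hchar).
  - by apply: conj_inv => //; rewrite (WB Hchar).
  - by apply: conj_inv => //; rewrite (WC Hchar).
  - by apply: conj_inv => //; rewrite (WD Hchar).
split; first exact: hW.
move=> i hi; split.
  rewrite RA_w; case: ifP => h //.
  have -> : i = d by lia.
  by rewrite wvec_d1.
rewrite (RB_w Hchar) //; case: i hi => [|i] hi //=.
by rewrite /phi !mul0r scale0r.
Qed.
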